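(* Let $q=(q_1,q_2,q_3)\in K^3$. Define the linear map $\Gamma_q:\mathcal{H}_{\mathbb{T}}\to\mathbf{WQSym}$ by, for $\mathcal{T}\in\mathbb{T}_n$, $$\Gamma_q(\mathcal{T})=\sum_{f\in\mathcal{P}(\mathcal{T})}q_1^{\ell_1(f)}q_2^{\ell_2(f)}q_3^{\ell_3(f)}\,f(1)\ldots f(n).$$ Then $\Gamma_q$ is a homogeneous surjective Hopf algebra morphism from $(\mathcal{H}_{\mathbb{T}},.,\Delta)$ to $(\mathbf{WQSym},.,\Delta)$. Moreover $j\circ\Gamma_{(q_2,q_1,q_3)}=\Gamma_{(q_1,q_2,q_3)}\circ\iota$.
   Context: Let $K$ be a field; convention $0^0=1$. For $n\geq0$, $[n]=\{1,\ldots,n\}$, $\mathbb{T}_n$ is the set of topologies on $[n]$, $\mathcal{H}_{\mathbb{T}}$ the $K$-vector space with basis $\bigsqcup_n\mathbb{T}_n$, graded by $n$. For a topology $\mathcal{T}$ on finite $X$: $i\leq_{\mathcal{T}}j$ iff every open set containing $i$ contains $j$; $i\sim_{\mathcal{T}}j$ iff $i\leq_{\mathcal{T}}j$ and $j\leq_{\mathcal{T}}i$; $i<_{\mathcal{T}}j$ iff $i\leq_{\mathcal{T}}j$ and not $j\leq_{\mathcal{T}}i$. $\mathcal{T}_{\mid Y}=\{O\cap Y\mid O\in\mathcal{T}\}$; for $X$ totally ordered of size $m$, $\mathrm{Std}(\mathcal{T})\in\mathbb{T}_m$ is the transport along the increasing bijection $X\to[m]$. Product on $\mathcal{H}_{\mathbb{T}}$: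 $\mathcal{T}.\mathcal{T}'$ ($\mathcal{T}\in\mathbb{T}_n,\mathcal{T}'\in\mathbb{T}_{n'}$) is the topology on $[n+n']$ with open sets $O\sqcup\{k+n\mid k\in O'\}$, $O\in\mathcal{T},O'\in\mathcal{T}'$; coproduct $\Delta(\mathcal{T})=\sum_{O\in\mathcal{T}}\mathrm{Std}(\mathcal{T}_{\mid[n]\setminus O})\otimes\mathrm{Std}(\mathcal{T}_{\mid O})$; $\iota(\mathcal{T})=\{X\setminus O\mid O\in\mathcal{T}\}$. $\mathbf{WQSym}$: a packed word of length $n$ is a word $f=f(1)\ldots f(n)$ of positive integers with $\{f(1),\ldots,f(n)\}=[\max f]$ (the empty word has $\max=0$). For a word $w$ of positive integers, $\mathrm{Pack}(w)$ is obtained by applying the unique increasing bijection from its set of letters onto some $[m]$; $w_{\mid I}$ is the subword of letters lying in $I$. $\mathbf{WQSym}$ has basis the packed words, product $f.f'=\sum f''$ over packed words $f''$ of length $n+n'$ with $\mathrm{Pack}(f''(1)\ldots f''(n))=f$ and $\mathrm{Pack}(f''(n+1)\ldots f''(n+n'))=f'$ ($n,n'$ the lengths of $f,f'$), and coproduct $\Delta(f)=\sum_{k=0}^{\max f}f_{\mid[k]}\otimes\mathrm{Pack}(f_{\mid\mathbb{N}_{>0}\setminus[k]})$; it is a graded (by length) Hopf algebra. $j$ is the linear involution sending a packed word $f$ to the word $(\max f+1-f(1))\ldots(\max f+1-f(n))$. A generalized T-partition of $\mathcal{T}\in\mathbb{T}_n$ is a surjection $f:[n]\to[p]$ (some $p\ge0$)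 such that $i\leq_{\mathcal{T}}j\Rightarrow f(i)\leq f(j)$, identified with the packed word $f(1)\ldots f(n)$; $\mathcal{P}(\mathcal{T})$ is their set. For $f\in\mathcal{P}(\mathcal{T})$: $\ell_1(f)=\sharp\{(i,j)\mid i<_{\mathcal{T}}j,\ i<j,\ f(i)=f(j)\}$; $\ell_2(f)=\sharp\{(i,j)\mid i<_{\mathcal{T}}j,\ i>j,\ f(i)=f(j)\}$; $\ell_3(f)=\sharp\{(i,j,k)\mid i<j<k,\ i\sim_{\mathcal{T}}k,\ \text{not } i\sim_{\mathcal{T}}j,\ \text{not } j\sim_{\mathcal{T}}k,\ f(i)=f(j)=f(k)\}$. *)

(* Defs.v *)
From HB Require Import structures.
From mathcomp Require Import all_boot all_order all_algebra.
Set Implicit Arguments. Unset Strict Implicit. Unset Printing Implicit Defensive.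
Import GRing.Theory.
Local Open Scope ring_scope.

Definition is_topology (n : nat) (T : {set {set 'I_n}}) : bool :=
  [&& set0 \in T, setT \in T,
      [forall O1 in T, forall O2 in T, (O1 :|: O2) \in T] &
      [forall O1 in T, forall O2 in T, (O1 :&: O2) \in T]].

Definition leT (n : nat) (T : {set {set 'I_n}}) (i j : 'I_n) : bool :=
  [forall O in T, (i \in O) ==> (j \in O)].
Definition simT (n : nat) (T : {set {set 'I_n}}) (i j : 'I_n) : bool :=
  leT T i j && leT T j i.
Definition ltT (n : nat) (T : {set {set 'I_n}}) (i j : 'I_n) : bool :=
  leT T i j && ~~ leT T j i.

Definition tprod (n n' : nat) (T : {set {set 'I_n}}) (T' : {set {set 'I_n'}})
  : {set {set 'I_(n + n')}} :=
  [set ((@lshift n n') @: O) :|: ((@rshift n n') @: O') | O : {set 'I_n} in T, O' : {set 'I_n'} in T'].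

(* Std(T_|Y): restriction to Y transported along the increasing bijection
   'I_#|Y| -> Y (enum_val enumerates Y in increasing order). *)
Definition stdres (n : nat) (T : {set {set 'I_n}}) (Y : {set 'I_n})
  : {set {set 'I_#|Y|}} :=
  [set [set i : 'I_#|Y| | enum_val i \in O] | O : {set 'I_n} in T].

Definition iotaT (n : nat) (T : {set {set 'I_n}}) : {set {set 'I_n}} :=
  [set ~: O | O : {set 'I_n} in T].

(* the unit of H_T: the unique topology on [0] *)
Definition unitT : {set {set 'I_0}} := [set set0].

Definition maxw (w : seq nat) : nat := \max_(x <- w) x.

Definition packed (w : seq nat) : bool :=
  all (fun x => 0 < x)%N w && all (fun k => k \in w) (iota 1 (maxw w)).

Definition pack (w : seq nat) : seq nat :=
  map (fun x => size (undup (filter (fun y => y <= x)%N w))) w.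

Definition jw (w : seq nat) : seq nat := map (fun x => (maxw w).+1 - x)%N w.

(* Elements of WQSym (resp. WQSym (x) WQSym) are encoded by their coefficient
   functions on the basis of packed words (resp. pairs of packed words). *)
Definition wqsym (K : Type) := seq nat -> K.

Definition wprod (K : fieldType) (a b : wqsym K) : wqsym K :=
  fun g => if packed g then
             \sum_(k < (size g).+1) a (pack (take k g)) * b (pack (drop k g))
           else 0.

(* coproduct of an element supported on packed words of length n:
   coefficient of u (x) v in Delta(a) *)
Definition wcoprod (K : fieldType) (n : nat) (a : wqsym K) (u v : seq nat) : K :=
  \sum_(t : n.-tuple 'I_n.+1)
    let g := map (@nat_of_ord _) (val t) in
    if packed g then
      a g * \sum_(0 <= k < (maxw g).+1)
              ((filter (fun x => x <= k)%N g == u) &&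
               (pack (filter (fun x => k < x)%N g) == v))%:R
    else 0.

Definition wcounit (K : fieldType) (a : wqsym K) : K := a [::].

Definition jmap (K : fieldType) (a : wqsym K) : wqsym K :=
  fun g => if packed g then a (jw g) else 0.

Definition wval (w : seq nat) (n : nat) (i : 'I_n) : nat := nth 0%N w i.

Definition is_Tpartition (n : nat) (T : {set {set 'I_n}}) (g : seq nat) : bool :=
  [&& size g == n, packed g &
      [forall i, forall j, leT T i j ==> (wval g i <= wval g j)%N]].

Definition ell1 (n : nat) (T : {set {set 'I_n}}) (g : seq nat) : nat :=
  #|[set p : 'I_n * 'I_n | [&& ltT T p.1 p.2, (p.1 < p.2)%N &
                               wval g p.1 == wval g p.2]]|.
Definition ell2 (n : nat) (T : {set {set 'I_n}}) (g : seq nat) : nat :=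
  #|[set p : 'I_n * 'I_n | [&& ltT T p.1 p.2, (p.2 < p.1)%N &
                               wval g p.1 == wval g p.2]]|.
Definition ell3 (n : nat) (T : {set {set 'I_n}}) (g : seq nat) : nat :=
  #|[set t : 'I_n * 'I_n * 'I_n |
      let: (i, j, k) := t in
      [&& (i < j)%N, (j < k)%N, simT T i k, ~~ simT T i j, ~~ simT T j k,
          wval g i == wval g j & wval g j == wval g k]]|.

Definition Gamma (K : fieldType) (q1 q2 q3 : K) (n : nat)
  (T : {set {set 'I_n}}) : wqsym K :=
  fun g => if is_Tpartition T g then
             q1 ^+ ell1 T g * q2 ^+ ell2 T g * q3 ^+ ell3 T g
           else 0.

(* Main.v *)
Require Import Defs.
From HB Require Import structures.
From mathcomp Require Import all_boot all_order all_algebra.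
From mathcomp Require Import zify ring.

Module P1.
Set Implicit Arguments. Unset Strict Implicit. Unset Printing Implicit Defensive.

Definition rk (w : seq nat) (x : nat) : nat := size (undup [seq y <- w | y <= x]).

Lemma packE w : pack w = map (rk w) w. Proof. by []. Qed.

Lemma rk_mono w x y : x <= y -> rk w x <= rk w y.
Proof.
move=> xy; apply: uniq_leq_size; first exact: undup_uniq.
move=> z; rewrite !mem_undup !mem_filter => /andP[zx ->]; rewrite andbT.
exact: leq_trans zx xy.
Qed.

Lemma rk_strict w x y : y \in w -> x < y -> rk w x < rk w y.
Proof.
move=> yw xy; rewrite /rk.
have -> : (size (undup [seq y0 <- w | y0 <= x])).+1 =
          size (y :: undup [seq y0 <- w | y0 <= x]) by [].
apply: uniq_leq_size.
  rewrite /= undup_uniq andbT mem_undup mem_filter negb_and.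
  by rewrite -ltnNge xy.
move=> z; rewrite inE !mem_undup !mem_filter => /orP[/eqP->|/andP[zx ->]].
  by rewrite leqnn yw.
by rewrite (leq_trans zx (ltnW xy)).
Qed.


Lemma rk_le w x y : x \in w -> y \in w -> (rk w x <= rk w y) = (x <= y).
Proof.
move=> xw yw; apply/idP/idP; last exact: rk_mono.
by apply: contraLR; rewrite -!ltnNge; apply: rk_strict.
Qed.

Lemma rk_eq w x y : x \in w -> y \in w -> (rk w x == rk w y) = (x == y).
Proof. by move=> xw yw; rewrite !eqn_leq !rk_le. Qed.

Lemma rk_pos w x : x \in w -> 0 < rk w x.
Proof.
move=> xw; rewrite /rk; case E: (undup _) => //.
have : x \in undup [seq y <- w | y <= x] by rewrite mem_undup mem_filter leqnn.
by rewrite E.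
Qed.

Lemma rk_le_size w x : rk w x <= size (undup w).
Proof.
apply: uniq_leq_size; first exact: undup_uniq.
by move=> z; rewrite !mem_undup mem_filter => /andP[].
Qed.

Lemma mem_maxw w x : x \in w -> x <= maxw w.
Proof. by move=> xw; rewrite /maxw (leq_bigmax_seq x). Qed.

Lemma packedP w :
  reflect ((forall x, x \in w -> 0 < x) /\ (forall k, 0 < k <= maxw w -> k \in w))
          (packed w).
Proof.
apply: (iffP andP) => [[/allP H1 /allP H2]|[H1 H2]]; split.
- exact: H1.
- by move=> k /andP[k0 km]; apply: H2; rewrite mem_iota k0 add1n ltnS.
- exact/allP.
- by apply/allP => k; rewrite mem_iota add1n ltnS => /andP[k0 km]; apply: H2; rewrite k0.
Qed.

Lemma rk_packed w x : packed w -> x \in w -> rk w x = x.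
Proof.
move=> /packedP[H1 H2] xw.
have P : perm_eq (undup [seq y <- w | y <= x]) (iota 1 x).
  apply: uniq_perm; [exact: undup_uniq | exact: iota_uniq |].
  move=> z; rewrite mem_undup mem_filter mem_iota add1n ltnS.
  apply/andP/andP => [[zx zw]|[z0 zx]]; first by rewrite zx H1.
  split=> //; apply: H2; rewrite z0 /=; exact: leq_trans zx (mem_maxw xw).
by rewrite /rk (perm_size P) size_iota.
Qed.

Lemma pack_id w : packed w -> pack w = w.
Proof.
move=> pw; rewrite packE -[RHS]map_id; apply/eq_in_map => x xw.
exact: rk_packed.
Qed.

Lemma pack_packed w : packed (pack w).
Proof.
apply/packedP; split.
  by move=> y; rewrite packE => /mapP[x xw ->]; apply: rk_pos.
move=> k /andP[k0 km].
have kd : k <= size (undup w).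
  apply: leq_trans km _; apply/bigmax_leqP_seq => y; rewrite packE.
  by move=> /mapP[x _ ->] _; apply: rk_le_size.
apply/negPn/negP => kn.
set s1 := map (rk w) (undup w).
have u1 : uniq s1.
  rewrite map_inj_in_uniq ?undup_uniq // => x y; rewrite !mem_undup => xw yw.
  by move/eqP; rewrite rk_eq // => /eqP.
have : size (k :: s1) <= size (iota 1 (size (undup w))).
  apply: uniq_leq_size.
    rewrite /= u1 andbT; apply: contra kn => /mapP[x xw ->].
    by apply: map_f; rewrite -mem_undup.
  move=> z; rewrite inE mem_iota add1n ltnS => /orP[/eqP->|]; first by rewrite k0.
  move=> /mapP[x]; rewrite mem_undup => xw ->; by rewrite rk_pos // rk_le_size.
by rewrite /= size_map size_iota ltnn.
Qed.

Lemma nth_pack_le w i j : i < size w -> j < size w ->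
  (nth 0 (pack w) i <= nth 0 (pack w) j) = (nth 0 w i <= nth 0 w j).
Proof.
move=> iw jw; rewrite packE !(nth_map 0) // rk_le //; exact: mem_nth.
Qed.

Lemma size_pack w : size (pack w) = size w.
Proof. by rewrite packE size_map. Qed.

Lemma size_undup_map (F G : nat -> nat) (s : seq nat) :
  {in s &, forall a b, (F a == F b) = (G a == G b)} ->
  size (undup (map F s)) = size (undup (map G s)).
Proof.
elim: s => //= a s IH H.
have Hs : {in s &, forall a b, (F a == F b) = (G a == G b)}.
  by move=> x y xs ys; apply: H; rewrite inE ?xs ?ys orbT.
have -> : (F a \in map F s) = (G a \in map G s).
  apply/mapP/mapP => [[b bs e]|[b bs e]]; exists b => //; apply/eqP.
    by rewrite eq_sym -H ?inE ?eqxx ?bs ?orbT // e.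
  by rewrite eq_sym H ?inE ?eqxx ?bs ?orbT // e.
by case: ifP => _ /=; rewrite IH.
Qed.

Lemma pack_det w w' : size w = size w' ->
  (forall i j, i < size w -> j < size w -> (nth 0 w i <= nth 0 w j) = (nth 0 w' i <= nth 0 w' j)) ->
  pack w = pack w'.
Proof.
move=> sz H.
have ew : w = map (nth 0 w) (iota 0 (size w)) by rewrite map_nth_iota0 // take_size.
have ew' : w' = map (nth 0 w') (iota 0 (size w)) by rewrite sz map_nth_iota0 // take_size.
apply: (@eq_from_nth _ 0); first by rewrite !size_pack.
move=> i; rewrite size_pack => iw.
rewrite packE (nth_map 0) // packE (nth_map 0) -?sz //.
rewrite /rk.
have E1 : [seq y <- w | y <= nth 0 w i] =
  map (nth 0 w) [seq j <- iota 0 (size w) | nth 0 w j <= nth 0 w i].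
  by have := filter_map (nth 0 w) (fun y => y <= nth 0 w i) (iota 0 (size w)); rewrite -ew.
have E2 : [seq y <- w' | y <= nth 0 w' i] =
  map (nth 0 w') [seq j <- iota 0 (size w) | nth 0 w' j <= nth 0 w' i].
  by have := filter_map (nth 0 w') (fun y => y <= nth 0 w' i) (iota 0 (size w)); rewrite -ew'.
have E3 : [seq j <- iota 0 (size w) | nth 0 w' j <= nth 0 w' i] =
          [seq j <- iota 0 (size w) | nth 0 w j <= nth 0 w i].
  by apply: eq_in_filter => j; rewrite mem_iota add0n => /andP[_ jw]; rewrite H.
rewrite E1 E2 E3.
apply: size_undup_map => a b; rewrite !mem_filter !mem_iota /= add0n.
move=> /andP[_ aw] /andP[_ bw].
by rewrite !eqn_leq !H.
Qed.

Lemma packed_eq w w' : packed w -> packed w' -> size w = size w' ->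
  (forall i j, i < size w -> j < size w -> (nth 0 w i <= nth 0 w j) = (nth 0 w' i <= nth 0 w' j)) ->
  w = w'.
Proof.
move=> pw pw' sz H; rewrite -(pack_id pw) -(pack_id pw'); exact: pack_det.
Qed.

End P1.
Import P1.

Module P2.
Set Implicit Arguments. Unset Strict Implicit. Unset Printing Implicit Defensive.

Definition E1 n (T : {set {set 'I_n}}) (g : seq nat) :=
  [set p : 'I_n * 'I_n | [&& ltT T p.1 p.2, (p.1 < p.2)%N & wval g p.1 == wval g p.2]].
Definition E2 n (T : {set {set 'I_n}}) (g : seq nat) :=
  [set p : 'I_n * 'I_n | [&& ltT T p.1 p.2, (p.2 < p.1)%N & wval g p.1 == wval g p.2]].
Definition E3 n (T : {set {set 'I_n}}) (g : seq nat) :=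
  [set t : 'I_n * 'I_n * 'I_n |
      let: (i, j, k) := t in
      [&& (i < j)%N, (j < k)%N, simT T i k, ~~ simT T i j, ~~ simT T j k,
          wval g i == wval g j & wval g j == wval g k]].

Lemma ell1E n (T : {set {set 'I_n}}) g : ell1 T g = #|E1 T g|. Proof. by []. Qed.
Lemma ell2E n (T : {set {set 'I_n}}) g : ell2 T g = #|E2 T g|. Proof. by []. Qed.
Lemma ell3E n (T : {set {set 'I_n}}) g : ell3 T g = #|E3 T g|. Proof. by []. Qed.

Section Transport.
Variables (m n : nat) (s : 'I_m -> 'I_n).
Hypothesis smono : forall a b, (s a < s b) = (a < b).
Variables (T1 : {set {set 'I_m}}) (T : {set {set 'I_n}}).
Hypothesis hT : forall a b, leT T1 a b = leT T (s a) (s b).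
Variables (w g : seq nat).
Hypothesis hw : forall a b, (wval w a == wval w b) = (wval g (s a) == wval g (s b)).

Lemma s_inj : injective s.
Proof.
move=> a b e; apply: val_inj; case: (ltngtP a b) => // h.
- by have := smono a b; rewrite h e ltnn.
- by have := smono b a; rewrite h e ltnn.
Qed.

Let Y := [set s a | a in 'I_m].

Lemma inY x : x \in Y -> exists a, x = s a.
Proof. by move=> /imsetP[a _ ->]; exists a. Qed.

Lemma hsim a b : simT T1 a b = simT T (s a) (s b).
Proof. by rewrite /simT !hT. Qed.
Lemma hlt a b : ltT T1 a b = ltT T (s a) (s b).
Proof. by rewrite /ltT !hT. Qed.

Lemma ell1_transport :
  ell1 T1 w = #|[set p in E1 T g | (p.1 \in Y) && (p.2 \in Y)]|.
Proof.
rewrite ell1E -(card_imset _ (f := fun p => (s p.1, s p.2))); last first.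
  by move=> [a b] [c d] /= [/s_inj -> /s_inj ->].
apply: eq_card => -[x y]; rewrite !inE /=.
apply/imsetP/idP => [[[a b]]|].
  by rewrite inE /= => H [-> ->]; rewrite -hlt smono -hw H !imset_f.
move=> /andP[H /andP[/inY[a ex] /inY[b ey]]]; subst x y; exists (a, b) => //.
by rewrite !smono in H; rewrite inE /= hlt hw.
Qed.

Lemma ell2_transport :
  ell2 T1 w = #|[set p in E2 T g | (p.1 \in Y) && (p.2 \in Y)]|.
Proof.
rewrite ell2E -(card_imset _ (f := fun p => (s p.1, s p.2))); last first.
  by move=> [a b] [c d] /= [/s_inj -> /s_inj ->].
apply: eq_card => -[x y]; rewrite !inE /=.
apply/imsetP/idP => [[[a b]]|].
  by rewrite inE /= => H [-> ->]; rewrite -hlt smono -hw H !imset_f.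
move=> /andP[H /andP[/inY[a ex] /inY[b ey]]]; subst x y; exists (a, b) => //.
by rewrite !smono in H; rewrite inE /= hlt hw.
Qed.

Lemma ell3_transport :
  ell3 T1 w = #|[set t in E3 T g | [&& t.1.1 \in Y, t.1.2 \in Y & t.2 \in Y]]|.
Proof.
rewrite ell3E -(card_imset _ (f := fun t => (s t.1.1, s t.1.2, s t.2))); last first.
  by move=> [[a b] c] [[d e] f] /= [/s_inj -> /s_inj -> /s_inj ->].
apply: eq_card => -[[x y] z]; rewrite !inE /=.
apply/imsetP/idP => [[[[a b] c]]|].
  rewrite inE /= => H [-> -> ->]; rewrite -!hsim !smono -!hw H !imset_f //.
move=> /andP[H /and3P[/inY[a ex] /inY[b ey] /inY[c ez]]]; subst x y z; exists (a, b, c) => //.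
by rewrite !smono in H; rewrite inE /= !hsim !hw.
Qed.

End Transport.

Lemma card_split2 n (S : {set 'I_n * 'I_n}) (Y : {set 'I_n}) :
  (forall p, p \in S -> (p.1 \in Y) = (p.2 \in Y)) ->
  #|S| = #|[set p in S | (p.1 \in Y) && (p.2 \in Y)]|
       + #|[set p in S | (p.1 \in ~: Y) && (p.2 \in ~: Y)]|.
Proof.
move=> H; rewrite -(cardsID [set p | p.1 \in Y] S); congr (_ + _);
  apply: eq_card => p; rewrite !inE; case pS: (p \in S); rewrite ?andbF //= H //.
- by rewrite andbb.
- by rewrite andbb andbC.
Qed.

Lemma card_split3 n (S : {set 'I_n * 'I_n * 'I_n}) (Y : {set 'I_n}) :
  (forall t, t \in S -> (t.1.1 \in Y) = (t.1.2 \in Y) /\ (t.1.2 \in Y) = (t.2 \in Y)) ->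
  #|S| = #|[set t in S | [&& t.1.1 \in Y, t.1.2 \in Y & t.2 \in Y]]|
       + #|[set t in S | [&& t.1.1 \in ~: Y, t.1.2 \in ~: Y & t.2 \in ~: Y]]|.
Proof.
move=> H; rewrite -(cardsID [set t | t.1.1 \in Y] S); congr (_ + _);
  apply: eq_card => t; rewrite !inE; case tS: (t \in S); rewrite ?andbF //=;
  have [-> ->] := H t tS.
- by rewrite andbb andbb.
- by rewrite andbb andbb andbC.
Qed.

End P2.
Import P2.

Module P3.
Set Implicit Arguments. Unset Strict Implicit. Unset Printing Implicit Defensive.
Import GRing.Theory.

Lemma packed_nth g i : packed g -> i < size g -> 0 < nth 0 g i <= maxw g.
Proof.
move=> /packedP[H1 _] ig; have gi := mem_nth 0 ig.
by rewrite H1 // mem_maxw.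
Qed.

Lemma leT_iota n (T : {set {set 'I_n}}) i j : leT (iotaT T) i j = leT T j i.
Proof.
apply/forallP/forallP => H O.
  apply/implyP => OT; apply/implyP => jO; apply/negPn/negP => iO.
  have := H (~: O); rewrite imset_f // !inE iO jO //.
apply/implyP => /imsetP[O' O'T ->]; rewrite !inE; apply/implyP; apply: contra.
by have := H O'; rewrite O'T /= => /implyP.
Qed.

Lemma simT_iota n (T : {set {set 'I_n}}) i j : simT (iotaT T) i j = simT T i j.
Proof. by rewrite /simT !leT_iota andbC. Qed.

Lemma ltT_iota n (T : {set {set 'I_n}}) i j : ltT (iotaT T) i j = ltT T j i.
Proof. by rewrite /ltT !leT_iota. Qed.

Lemma nth_jw g i : i < size g -> nth 0 (jw g) i = (maxw g).+1 - nth 0 g i.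
Proof. by move=> ig; rewrite /jw (nth_map 0). Qed.

Lemma jw_packed g : packed g -> packed (jw g).
Proof.
move=> pg; have /packedP[H1 H2] := pg.
have let_g y : y \in g -> 0 < y <= maxw g by move=> yg; rewrite H1 // mem_maxw.
apply/packedP; split.
  move=> x /mapP[y yg ->]; have := let_g y yg; lia.
move=> k /andP[k0 km].
have km' : k <= maxw g.
  apply: leq_trans km _; apply/bigmax_leqP_seq => x /mapP[y yg ->] _.
  have := let_g y yg; lia.
apply/mapP; exists ((maxw g).+1 - k); last lia.
apply: H2; lia.
Qed.

Lemma wval_jw n g (i : 'I_n) : size g = n ->
  wval (jw g) i = (maxw g).+1 - wval g i.
Proof. by move=> sz; rewrite /wval nth_jw // sz. Qed.

Lemma Tpart_iota n (T : {set {set 'I_n}}) g : packed g ->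
  is_Tpartition (iotaT T) g = is_Tpartition T (jw g).
Proof.
move=> pg; rewrite /is_Tpartition size_map (jw_packed pg) pg /=.
case sz: (size g == n) => //=; move/eqP: sz => sz.
have b (i : 'I_n) : 0 < wval g i <= maxw g.
  by apply: packed_nth; rewrite // sz.
apply/forallP/forallP => H i; apply/forallP => j.
  rewrite !wval_jw //.
  have := forallP (H j) i; rewrite leT_iota.
  have := b i; have := b j; case: (leT T i j) => //= ? ?; lia.
have := forallP (H j) i; rewrite !wval_jw // -leT_iota.
have := b i; have := b j; case: (leT _ j i) => //= ? ?; lia.
Qed.

Section J.
Variables (n : nat) (T : {set {set 'I_n}}) (g : seq nat).
Hypothesis pg : packed g.
Hypothesis sz : size g = n.

Let b (i : 'I_n) : 0 < wval g i <= maxw g.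
Proof. by apply: packed_nth; rewrite // sz. Qed.

Let eqj (i j : 'I_n) : (wval (jw g) i == wval (jw g) j) = (wval g i == wval g j).
Proof. rewrite !wval_jw //; have := b i; have := b j; move=> ? ?; apply/eqP/eqP; lia. Qed.

Lemma ell1_iota : ell1 (iotaT T) g = ell2 T (jw g).
Proof.
rewrite ell1E ell2E -(card_imset _ (f := fun p : 'I_n * 'I_n => (p.2, p.1))); last first.
  by move=> [a c] [d e] /= [-> ->].
apply: eq_card => -[x y]; rewrite !inE /=; apply/imsetP/idP => [[[a c]]|H].
  by rewrite inE /= ltT_iota eqj => H [-> ->]; rewrite eq_sym.
exists (y, x) => //; move: H; rewrite inE /= ltT_iota eqj eq_sym //.
Qed.

Lemma ell2_iota : ell2 (iotaT T) g = ell1 T (jw g).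
Proof.
rewrite ell1E ell2E -(card_imset _ (f := fun p : 'I_n * 'I_n => (p.2, p.1))); last first.
  by move=> [a c] [d e] /= [-> ->].
apply: eq_card => -[x y]; rewrite !inE /=; apply/imsetP/idP => [[[a c]]|H].
  by rewrite inE /= ltT_iota eqj => H [-> ->]; rewrite eq_sym.
exists (y, x) => //; move: H; rewrite inE /= ltT_iota eqj eq_sym //.
Qed.

Lemma ell3_iota : ell3 (iotaT T) g = ell3 T (jw g).
Proof.
rewrite !ell3E; apply: eq_card => -[[x y] z]; rewrite !inE /=.
by rewrite !simT_iota !eqj.
Qed.

End J.

Local Open Scope ring_scope.

Lemma jpart (K : fieldType) (q1 q2 q3 : K) n (T : {set {set 'I_n}}) g :
  jmap (Gamma q2 q1 q3 T) g = Gamma q1 q2 q3 (iotaT T) g.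
Proof.
rewrite /jmap /Gamma; case pg: (packed g); last by rewrite /is_Tpartition pg andbF.
rewrite Tpart_iota //; case: ifP => // /and3P[/eqP sz _ _].
have sz' : size g = n by rewrite -sz size_map.
by rewrite ell1_iota // ell2_iota // ell3_iota // (mulrC (q2 ^+ _)).
Qed.

Lemma Gamma_Tpart (K : fieldType) (q1 q2 q3 : K) n (T : {set {set 'I_n}}) g :
  Gamma q1 q2 q3 T g != 0 -> is_Tpartition T g.
Proof. by rewrite /Gamma; case: ifP => //; rewrite eqxx. Qed.

Lemma homog (K : fieldType) (q1 q2 q3 : K) n (T : {set {set 'I_n}}) g :
  Gamma q1 q2 q3 T g != 0 -> size g = n.
Proof. by move/Gamma_Tpart => /and3P[/eqP]. Qed.

Lemma card0_I0 (A : {set 'I_0 * 'I_0}) : #|A| = 0%N.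
Proof. by apply: eq_card0 => -[[]]. Qed.

Lemma unitP (K : fieldType) (q1 q2 q3 : K) g :
  Gamma q1 q2 q3 unitT g = (g == [::])%:R.
Proof.
rewrite /Gamma /is_Tpartition; case: g => [|x g] /=; last by [].
rewrite /packed /maxw big_nil /=.
have -> : [forall i : 'I_0, forall j, leT unitT i j ==> (wval [::] i <= wval [::] j)%N].
  by apply/forallP => -[].
rewrite /ell1 /ell2 /ell3 !card0_I0.
have -> : #|[set t : 'I_0 * 'I_0 * 'I_0 | let: (i, j, k) := t in
      [&& (i < j)%N, (j < k)%N, simT unitT i k, ~~ simT unitT i j, ~~ simT unitT j k,
          wval [::] i == wval [::] j & wval [::] j == wval [::] k]]| = 0%N.
  by apply: eq_card0 => -[[[]]].
by rewrite !expr0 !mulr1.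
Qed.

Lemma counitP (K : fieldType) (q1 q2 q3 : K) n (T : {set {set 'I_n}}) :
  wcounit (Gamma q1 q2 q3 T) = (n == 0)%:R.
Proof.
rewrite /wcounit /Gamma /is_Tpartition /=; case: n T => [|n] T; last by [].
rewrite /packed /maxw big_nil /=.
have -> : [forall i : 'I_0, forall j, leT T i j ==> (wval [::] i <= wval [::] j)%N].
  by apply/forallP => -[].
rewrite /ell1 /ell2 /ell3 !card0_I0.
have -> : #|[set t : 'I_0 * 'I_0 * 'I_0 | let: (i, j, k) := t in
      [&& (i < j)%N, (j < k)%N, simT T i k, ~~ simT T i j, ~~ simT T j k,
          wval [::] i == wval [::] j & wval [::] j == wval [::] k]]| = 0%N.
  by apply: eq_card0 => -[[[]]].
by rewrite !expr0 !mulr1.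
Qed.

End P3.
Import P3.

Module P4.
Set Implicit Arguments. Unset Strict Implicit. Unset Printing Implicit Defensive.
Import GRing.Theory.

Definition toword n (t : n.-tuple 'I_n.+1) : seq nat := map (@nat_of_ord _) (val t).

Lemma size_toword n (t : n.-tuple 'I_n.+1) : size (toword t) = n.
Proof. by rewrite size_map size_tuple. Qed.

Lemma toword_inj n : injective (@toword n).
Proof.
move=> t1 t2 e; apply: val_inj; apply: (inj_map val_inj); exact: e.
Qed.

Lemma maxw_size g : packed g -> maxw g <= size g.
Proof.
move=> /packedP[_ H2].
rewrite -(size_iota 1 (maxw g)); apply: uniq_leq_size; first exact: iota_uniq.
by move=> k; rewrite mem_iota add1n ltnS => /andP[k0 km]; apply: H2; rewrite k0.
Qed.

Lemma toword_ex n g : size g = n -> packed g -> exists t : n.-tuple 'I_n.+1, toword t = g.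
Proof.
move=> sz pg.
have sz' : size (map (@inord n) g) == n by rewrite size_map sz.
exists (Tuple sz'); rewrite /toword /= -map_comp -[RHS]map_id; apply/eq_in_map => x xg /=.
rewrite inordK // ltnS -sz; apply: leq_trans (maxw_size pg); exact: mem_maxw.
Qed.

Definition Tof n (f : seq nat) : {set {set 'I_n}} :=
  [set O : {set 'I_n} | [forall i, forall j, (wval f i <= wval f j) ==> (i \in O) ==> (j \in O)]].

Lemma Tof_top n f : is_topology (Tof n f).
Proof.
apply/and4P; split; rewrite ?inE.
- by apply/forallP => i; apply/forallP => j; rewrite !inE /= implybT.
- by apply/forallP => i; apply/forallP => j; rewrite !inE /= !implybT.
- apply/forallP => O1; apply/implyP; rewrite inE => /forallP H1.
  apply/forallP => O2; apply/implyP; rewrite inE => /forallP H2.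
  rewrite inE; apply/forallP => i; apply/forallP => j; apply/implyP => ij.
  rewrite !inE; apply/implyP; case/orP => iO.
    by have := forallP (H1 i) j; rewrite ij iO /= => ->.
  by have := forallP (H2 i) j; rewrite ij iO /= => ->; rewrite orbT.
- apply/forallP => O1; apply/implyP; rewrite inE => /forallP H1.
  apply/forallP => O2; apply/implyP; rewrite inE => /forallP H2.
  rewrite inE; apply/forallP => i; apply/forallP => j; apply/implyP => ij.
  rewrite !inE; apply/implyP => /andP[iO1 iO2].
  have := forallP (H1 i) j; rewrite ij iO1 => /= ->.
  by have := forallP (H2 i) j; rewrite ij iO2.
Qed.

Lemma leT_Tof n f (i j : 'I_n) : leT (Tof n f) i j = (wval f i <= wval f j).
Proof.
apply/forallP/idP => [H|ij O].
  have := H [set x | wval f i <= wval f x]; rewrite !inE leqnn /=.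
  move/implyP; apply; apply/forallP => a; apply/forallP => b; apply/implyP => ab.
  rewrite !inE; apply/implyP => ia; exact: leq_trans ia ab.
apply/implyP; rewrite inE => /forallP H; have := forallP (H i) j; by rewrite ij.
Qed.

Definition Ncmp n (g : seq nat) := #|[set p : 'I_n * 'I_n | wval g p.1 <= wval g p.2]|.

Lemma Ncmp_le n g : Ncmp n g <= n * n.
Proof. by rewrite /Ncmp; apply: leq_trans (max_card _) _; rewrite card_prod !card_ord. Qed.

Local Open Scope ring_scope.

Section Surj.
Variables (K : fieldType) (q1 q2 q3 : K).
Notation G := (Gamma q1 q2 q3).

Lemma Gamma_Tof_self n f : size f = n -> packed f -> G (Tof n f) f = 1.
Proof.
move=> sz pf; rewrite /Gamma /is_Tpartition sz eqxx pf /=.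
have -> : [forall i, forall j, leT (Tof n f) i j ==> (wval f i <= wval f j)%N].
  by apply/forallP => i; apply/forallP => j; rewrite leT_Tof implybb.
have e1 : ell1 (Tof n f) f = 0%N.
  apply: eq_card0 => -[i j]; rewrite !inE /ltT !leT_Tof /=.
  by apply/negP => /and3P[/andP[a b] _ /eqP e]; move: b; rewrite e leqnn.
have e2 : ell2 (Tof n f) f = 0%N.
  apply: eq_card0 => -[i j]; rewrite !inE /ltT !leT_Tof /=.
  by apply/negP => /and3P[/andP[a b] _ /eqP e]; move: b; rewrite e leqnn.
have e3 : ell3 (Tof n f) f = 0%N.
  apply: eq_card0 => -[[i j] k]; rewrite !inE /simT !leT_Tof /=.
  by apply/negP => /and5P[_ _ _ H /and3P[_ /eqP e _]]; move: H; rewrite e leqnn.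
by rewrite e1 e2 e3 !expr0 !mulr1.
Qed.

Definition good n (f : seq nat) (c : {set {set 'I_n}} -> K) :=
  (forall T, c T != 0 -> is_topology T) /\
  (forall g : seq nat, \sum_(T : {set {set 'I_n}}) c T * G T g = (g == f)%:R).

Lemma surj_step n f : size f = n -> packed f ->
  (forall g, size g = n -> packed g -> (Ncmp n f < Ncmp n g)%N -> exists c, @good n g c) ->
  exists c, @good n f c.
Proof.
move=> sz pf IH.
pose cond (t : n.-tuple 'I_n.+1) := (toword t != f) && (G (Tof n f) (toword t) != 0).
have : forall t : n.-tuple 'I_n.+1, exists c, cond t -> @good n (toword t) c.
  move=> t; case ct: (cond t); last by exists (fun _ => 0).
  move: ct => /andP[ne /Gamma_Tpart /and3P[/eqP szt pt /forallP Ht]].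
  have [c gc] : exists c, @good n (toword t) c.
    apply: IH => //.
    have AB : [set p : 'I_n * 'I_n | (wval f p.1 <= wval f p.2)%N] \subset
              [set p : 'I_n * 'I_n | (wval (toword t) p.1 <= wval (toword t) p.2)%N].
      apply/subsetP => -[i j]; rewrite !inE /= => fij.
      by have := forallP (Ht i) j; rewrite leT_Tof fij.
    rewrite /Ncmp ltn_neqAle subset_leq_card // andbT.
    apply: contra ne => /eqP E.
    have /eqP E2 : [set p : 'I_n * 'I_n | (wval f p.1 <= wval f p.2)%N] ==
              [set p : 'I_n * 'I_n | (wval (toword t) p.1 <= wval (toword t) p.2)%N].
      by rewrite eqEcard AB E leqnn.
    apply/eqP; apply: packed_eq => //; first by rewrite sz.
    move=> i j; rewrite szt => ilt jlt.
    have := congr1 (fun A : {set 'I_n * 'I_n} => (Ordinal ilt, Ordinal jlt) \in A) E2.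
    by rewrite /= !inE.
  by exists c.
case/fin_all_exists => C HC.
exists (fun T => (T == Tof n f)%:R - \sum_t (if cond t then G (Tof n f) (toword t) * C t T else 0)).
split.
  move=> T; apply: contraR => nT.
  have -> : (T == Tof n f) = false by apply: contraNF nT => /eqP ->; exact: Tof_top.
  rewrite sub0r oppr_eq0; apply/eqP; apply: big1 => t _.
  case ct: (cond t) => //; have [H1 _] := HC t ct.
  have -> : C t T = 0 by apply/eqP; apply: contraR nT; apply: H1.
  by rewrite mulr0.
move=> g.
under eq_bigr => T _ do rewrite mulrBl mulr_suml.
rewrite sumrB.
rewrite (bigD1 (Tof n f)) //= eqxx mul1r big1 ?addr0; last first.
  by move=> T /negbTE ->; rewrite mul0r.
rewrite exchange_big /=.
under eq_bigr => t _ do under eq_bigr => T _ do rewrite (fun_if (fun x => x * G T g)) mul0r.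
have inner : forall t, \sum_(T : {set {set 'I_n}}) (if cond t then G (Tof n f) (toword t) * C t T * G T g else 0)
   = if cond t then G (Tof n f) (toword t) * (g == toword t)%:R else 0.
  move=> t; case ct: (cond t); last by rewrite big1.
  have [_ H2] := HC t ct; rewrite -H2 mulr_sumr; apply: eq_bigr => T _; by rewrite mulrA.
under eq_bigr => t _ do rewrite inner.
case: (eqVneq g f) => [->|ngf].
  rewrite Gamma_Tof_self // big1 ?subr0 // => t _; case ct: (cond t) => //.
  by move: ct => /andP[ne _]; rewrite eq_sym (negbTE ne) mulr0.
case G0: (G (Tof n f) g == 0).
  rewrite (eqP G0) sub0r big1 ?oppr0 // => t _; case: ifP => // _.
  by case: eqVneq => [e|]; [rewrite -e (eqP G0) mul0r | rewrite mulr0].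
have /and3P[/eqP szg pg _] := Gamma_Tpart (negbT G0).
have [t0 e0] := toword_ex szg pg.
rewrite (bigD1 t0) //= big1.
  have -> : cond t0 by rewrite /cond e0 ngf G0.
  by rewrite -e0 eqxx mulr1 addr0 subrr.
move=> t nt; case: ifP => // _.
have -> : (g == toword t) = false.
  by rewrite -e0; apply/negbTE; apply: contra nt => /eqP /toword_inj ->.
by rewrite mulr0.
Qed.

Lemma surj n f : size f = n -> packed f -> exists c, @good n f c.
Proof.
move=> sz pf.
suff H : forall k f, size f = n -> packed f -> (n * n - Ncmp n f < k)%N -> exists c, @good n f c.
  apply: (H (n * n - Ncmp n f).+1) => //.
elim=> [//|k IH] f' sz' pf' lt.
apply: surj_step => // g szg pg lfg; apply: IH => //.
have := Ncmp_le n g; have := Ncmp_le n f'; lia.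
Qed.
End Surj.

End P4.
Import P4.

Module P5.
Set Implicit Arguments. Unset Strict Implicit. Unset Printing Implicit Defensive.
Import GRing.Theory.

Lemma top0 n (T : {set {set 'I_n}}) : is_topology T -> set0 \in T.
Proof. by case/and4P. Qed.
Lemma topT n (T : {set {set 'I_n}}) : is_topology T -> setT \in T.
Proof. by case/and4P. Qed.

Section Prod.
Variables (n n' : nat) (T : {set {set 'I_n}}) (T' : {set {set 'I_n'}}).
Hypotheses (tT : is_topology T) (tT' : is_topology T').

Notation L := (@lshift n n').
Notation R := (@rshift n n').
Notation X O O' := ((@lshift n n') @: O :|: (@rshift n n') @: O').

Lemma inX_L a (O : {set 'I_n}) (O' : {set 'I_n'}) : (L a \in X O O') = (a \in O).
Proof.
rewrite inE mem_imset; last exact: lshift_inj.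
case: (a \in O) => //=; apply/negbTE/imsetP => -[b _ /eqP]; by rewrite eq_lrshift.
Qed.

Lemma inX_R b (O : {set 'I_n}) (O' : {set 'I_n'}) : (R b \in X O O') = (b \in O').
Proof.
rewrite inE mem_imset; last exact: rshift_inj.
rewrite orbC.
case: (b \in O') => //=; apply/negbTE/imsetP => -[a _ /eqP]; by rewrite eq_rlshift.
Qed.

Lemma X_in O O' : O \in T -> O' \in T' -> X O O' \in tprod T T'.
Proof. by move=> OT O'T; apply/imset2P; exists O O'. Qed.

Lemma leT_LL a b : leT (tprod T T') (L a) (L b) = leT T a b.
Proof.
apply/forallP/forallP => H O.
  apply/implyP => OT; have := H (X O setT); rewrite X_in ?topT //= !inX_L.
  by [].
apply/implyP => /imset2P[O1 O1' O1T O1'T ->]; rewrite !inX_L.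
by have := H O1; rewrite O1T.
Qed.

Lemma leT_RR a b : leT (tprod T T') (R a) (R b) = leT T' a b.
Proof.
apply/forallP/forallP => H O.
  apply/implyP => OT; have := H (X setT O); rewrite X_in ?topT //= !inX_R.
  by [].
apply/implyP => /imset2P[O1 O1' O1T O1'T ->]; rewrite !inX_R.
by have := H O1'; rewrite O1'T.
Qed.

Lemma leT_LR a b : leT (tprod T T') (L a) (R b) = false.
Proof.
apply/negbTE/negP => /forallP/(_ (X setT set0)); rewrite X_in ?topT ?top0 //=.
by rewrite inX_L inX_R !inE.
Qed.

Lemma leT_RL a b : leT (tprod T T') (R b) (L a) = false.
Proof.
apply/negbTE/negP => /forallP/(_ (X set0 setT)); rewrite X_in ?topT ?top0 //=.
by rewrite inX_L inX_R !inE.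
Qed.

Lemma same_block (x y : 'I_(n + n')) : leT (tprod T T') x y -> (x < n) = (y < n).
Proof.
case: (split_ordP x) => a ->; case: (split_ordP y) => b ->;
  rewrite ?leT_LR ?leT_RL //= => _; lia.
Qed.

Lemma memYL (x : 'I_(n + n')) : (x \in [set L a | a in 'I_n]) = (x < n).
Proof.
apply/imsetP/idP => [[a _ ->]|]; first by rewrite /= ltn_ord.
case: (split_ordP x) => [a ->|b ->] /=; first by exists a.
lia.
Qed.

Lemma memYR (x : 'I_(n + n')) : (x \in [set R a | a in 'I_n']) = ~~ (x < n).
Proof.
apply/imsetP/idP => [[a _ ->]|]; first by rewrite /=; lia.
case: (split_ordP x) => [a ->|b ->] /=; last by exists b.
by [].
Qed.

Lemma YLC : ~: [set L a | a in 'I_n] = [set R a | a in 'I_n'].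
Proof. by apply/setP => x; rewrite inE memYL memYR. Qed.

Variable g : seq nat.
Hypothesis pg : packed g.
Hypothesis szg : size g = (n + n')%N.

Let w1 := pack (take n g).
Let w2 := pack (drop n g).

Lemma size_w1 : size w1 = n.
Proof. by rewrite size_pack size_takel // szg leq_addr. Qed.
Lemma size_w2 : size w2 = n'.
Proof. by rewrite size_pack size_drop szg addKn. Qed.

Lemma cmpL (a b : 'I_n) : (wval w1 a <= wval w1 b) = (wval g (L a) <= wval g (L b)).
Proof.
rewrite /wval nth_pack_le ?size_takel ?szg ?leq_addr // !nth_take //.
Qed.

Lemma cmpR (a b : 'I_n') : (wval w2 a <= wval w2 b) = (wval g (R a) <= wval g (R b)).
Proof.
rewrite /wval nth_pack_le ?size_drop ?szg ?addKn // !nth_drop //.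
Qed.

Lemma eqL (a b : 'I_n) : (wval w1 a == wval w1 b) = (wval g (L a) == wval g (L b)).
Proof. by rewrite !eqn_leq !cmpL. Qed.
Lemma eqR (a b : 'I_n') : (wval w2 a == wval w2 b) = (wval g (R a) == wval g (R b)).
Proof. by rewrite !eqn_leq !cmpR. Qed.

Lemma smonoL (a b : 'I_n) : (L a < L b) = (a < b). Proof. by []. Qed.
Lemma smonoR (a b : 'I_n') : (R a < R b) = (a < b). Proof. by rewrite /= ltn_add2l. Qed.

Lemma hTL a b : leT T a b = leT (tprod T T') (L a) (L b). Proof. by rewrite leT_LL. Qed.
Lemma hTR a b : leT T' a b = leT (tprod T T') (R a) (R b). Proof. by rewrite leT_RR. Qed.

Lemma Tpart_prod : is_Tpartition (tprod T T') g = is_Tpartition T w1 && is_Tpartition T' w2.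
Proof.
rewrite /is_Tpartition szg size_w1 size_w2 !eqxx pg !pack_packed /=.
apply/forallP/andP => [H|[/forallP H1 /forallP H2]].
  split; apply/forallP => a; apply/forallP => b; apply/implyP.
    by rewrite cmpL hTL; move/implyP: (forallP (H (L a)) (L b)).
  by rewrite cmpR hTR; move/implyP: (forallP (H (R a)) (R b)).
move=> x; apply/forallP => y; apply/implyP.
case: (split_ordP x) => a ->; case: (split_ordP y) => b ->;
  rewrite ?leT_LR ?leT_RL //.
  by rewrite -hTL -cmpL; move/implyP: (forallP (H1 a) b).
by rewrite -hTR -cmpR; move/implyP: (forallP (H2 a) b).
Qed.

Lemma ell1_prod : ell1 (tprod T T') g = (ell1 T w1 + ell1 T' w2)%N.
Proof.
rewrite (ell1_transport (s := L) smonoL hTL eqL) (ell1_transport (s := R) smonoR hTR eqR).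
rewrite -YLC ell1E; apply: card_split2 => p; rewrite inE => /andP[/andP[H _] _].
by rewrite !memYL; apply: same_block.
Qed.

Lemma ell2_prod : ell2 (tprod T T') g = (ell2 T w1 + ell2 T' w2)%N.
Proof.
rewrite (ell2_transport (s := L) smonoL hTL eqL) (ell2_transport (s := R) smonoR hTR eqR).
rewrite -YLC ell2E; apply: card_split2 => p; rewrite inE => /andP[/andP[H _] _].
by rewrite !memYL; apply: same_block.
Qed.

Lemma ell3_prod : ell3 (tprod T T') g = (ell3 T w1 + ell3 T' w2)%N.
Proof.
rewrite (ell3_transport (s := L) smonoL hTL eqL) (ell3_transport (s := R) smonoR hTR eqR).
rewrite -YLC ell3E; apply: card_split3 => -[[i j] k]; rewrite inE /=.
case/and3P => ij jk /andP[/andP[ik _] _].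
rewrite !memYL; have := same_block ik; lia.
Qed.

Local Open Scope ring_scope.

Lemma Gamma_prod_main (K : fieldType) (q1 q2 q3 : K) :
  Gamma q1 q2 q3 (tprod T T') g = Gamma q1 q2 q3 T w1 * Gamma q1 q2 q3 T' w2.
Proof.
rewrite /Gamma Tpart_prod; case: (is_Tpartition T w1); last by rewrite mul0r.
case: (is_Tpartition T' w2); last by rewrite mulr0.
rewrite /= ell1_prod ell2_prod ell3_prod !exprD.
move: (q1 ^+ ell1 T w1) (q1 ^+ ell1 T' w2) (q2 ^+ ell2 T w1) (q2 ^+ ell2 T' w2) (q3 ^+ ell3 T w1) (q3 ^+ ell3 T' w2).
by move=> a a' b b' c c'; ring.
Qed.

End Prod.

Local Open Scope ring_scope.

Lemma prodP (K : fieldType) (q1 q2 q3 : K) n n' (T : {set {set 'I_n}}) (T' : {set {set 'I_n'}}) :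
  is_topology T -> is_topology T' -> forall g,
  Gamma q1 q2 q3 (tprod T T') g = wprod (Gamma q1 q2 q3 T) (Gamma q1 q2 q3 T') g.
Proof.
move=> tT tT' g; rewrite /wprod.
case pg: (packed g); last by rewrite /Gamma /is_Tpartition pg andbF.
have stk (k : 'I_(size g).+1) : (size (take k g) + size (drop k g))%N = size g.
  by rewrite -size_cat cat_take_drop.
case sz: (size g == (n + n')%N).
  have nlt : (n < (size g).+1)%N by rewrite (eqP sz) ltnS leq_addr.
  rewrite (bigD1 (Ordinal nlt)) //= big1 ?addr0.
    by rewrite Gamma_prod_main // (eqP sz).
  move=> k nk; case E: (Gamma q1 q2 q3 T (pack (take k g)) == 0).
    by rewrite (eqP E) mul0r.
  move/negbT: E => /homog; rewrite size_pack size_takel; last by rewrite -ltnS ltn_ord.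
  move=> e.
  have ek : k = Ordinal nlt by apply: val_inj.
  by rewrite ek eqxx in nk.
rewrite /Gamma /is_Tpartition sz /= big1 // => k _.
case E: (Gamma q1 q2 q3 T (pack (take k g)) == 0).
  by move: E; rewrite /Gamma; case: ifP => // _ /eqP ->; rewrite mul0r.
case E': (Gamma q1 q2 q3 T' (pack (drop k g)) == 0).
  by move: E'; rewrite /Gamma; case: ifP => // _ /eqP ->; rewrite mulr0.
move/negbT: E => /homog; rewrite size_pack => e1.
move/negbT: E' => /homog; rewrite size_pack => e2.
have := stk k; rewrite e1 e2 => e.
by rewrite e eqxx in sz.
Qed.

End P5.
Import P5.

Module P6a.
Set Implicit Arguments. Unset Strict Implicit. Unset Printing Implicit Defensive.

Lemma enum_sub n (Y : {set 'I_n}) : enum Y = [seq x <- enum 'I_n | x \in Y].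
Proof. by rewrite enumT. Qed.

Lemma sorted_enum n (Y : {set 'I_n}) : sorted (fun x y : 'I_n => x < y) (enum Y).
Proof.
rewrite enum_sub; apply: sorted_filter; first by move=> x y z; apply: ltn_trans.
have := iota_ltn_sorted 0 n; rewrite -val_enum_ord sorted_map //.
Qed.

Lemma size_enum_set n (Y : {set 'I_n}) : size (enum Y) = #|Y|.
Proof. by rewrite cardE. Qed.

Lemma enum_val_mono n (Y : {set 'I_n}) (a b : 'I_#|Y|) :
  (enum_val a < enum_val b) = (a < b).
Proof.
have x0 : 'I_n by exact: enum_val a.
have H (c d : 'I_#|Y|) : c < d -> enum_val c < enum_val d.
  move=> cd; rewrite !(enum_val_nth x0).
  have tr : transitive (fun x y : 'I_n => x < y) by move=> y x z; apply: ltn_trans.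
  have := sorted_ltn_nth tr x0 (sorted_enum Y); move/(_ c d).
  by rewrite !inE !size_enum_set !ltn_ord; apply.
apply/idP/idP; last exact: H.
case: (ltngtP a b) => // [ba|/val_inj ->]; last by rewrite ltnn.
by move=> ab; have := H _ _ ba; rewrite ltnNge (ltnW ab).
Qed.

Lemma nth_enum_map n (Y : {set 'I_n}) (F : 'I_n -> nat) (a : 'I_#|Y|) :
  nth 0 (map F (enum Y)) a = F (enum_val a).
Proof.
by rewrite (nth_map (enum_val a)) ?size_enum_set ?ltn_ord // -enum_val_nth.
Qed.

Lemma index_enum_val n (Y : {set 'I_n}) (a : 'I_#|Y|) : index (enum_val a) (enum Y) = a.
Proof.
by rewrite (enum_val_nth (enum_val a)) index_uniq ?enum_uniq ?size_enum_set ?ltn_ord.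
Qed.

Lemma enum_val_of n (Y : {set 'I_n}) i : i \in Y -> exists a : 'I_#|Y|, i = enum_val a.
Proof. by move=> iY; exists (enum_rank_in iY i); rewrite enum_rankK_in. Qed.

Lemma index_lt n (Y : {set 'I_n}) i : i \in Y -> index i (enum Y) < #|Y|.
Proof. by move=> iY; rewrite -size_enum_set index_mem mem_enum. Qed.

Lemma map_nth_index (T : eqType) (e : seq T) (s : seq nat) :
  uniq e -> size s = size e -> map (fun x => nth 0 s (index x e)) e = s.
Proof.
move=> ue sz; apply: (@eq_from_nth _ 0); first by rewrite size_map sz.
move=> i; rewrite size_map => ie; case: e ue sz ie => [//|x0 e'] ue sz ie.
by rewrite (nth_map x0) // index_uniq.
Qed.

Lemma leT_stdres n (T : {set {set 'I_n}}) (Y : {set 'I_n}) a b :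
  leT (stdres T Y) a b = leT T (enum_val a) (enum_val b).
Proof.
apply/forallP/forallP => H O.
  apply/implyP => OT; have := H [set i : 'I_#|Y| | enum_val i \in O].
  by rewrite imset_f // !inE.
apply/implyP => /imsetP[O' O'T ->]; rewrite !inE.
by have := H O'; rewrite O'T.
Qed.

Lemma upset_open n (T : {set {set 'I_n}}) (O : {set 'I_n}) : is_topology T ->
  (forall i j, i \in O -> leT T i j -> j \in O) -> O \in T.
Proof.
case/and4P => T0 T1 /forallP TU /forallP TI H.
have capT (i : 'I_n) : \bigcap_(O' in T | i \in O') O' \in T.
  apply: (big_ind (fun X => X \in T)) => //; last by move=> O' /andP[].
  move=> X Y XT YT; have := TI X; rewrite XT /= => /forallP/(_ Y); by rewrite YT.
have -> : O = \bigcup_(i in O) \bigcap_(O' in T | i \in O') O'.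
  apply/setP => j; apply/idP/bigcupP => [jO|[i iO /bigcapP Hj]].
    by exists j => //; apply/bigcapP => O' /andP[].
  apply: (H i) => //; apply/forallP => O'; apply/implyP => O'T; apply/implyP => iO'.
  by apply: Hj; rewrite O'T.
apply: (big_ind (fun X => X \in T)) => //.
move=> X Y XT YT; have := TU X; rewrite XT /= => /forallP/(_ Y); by rewrite YT.
Qed.

Lemma word_map n g : size g = n -> g = map (@wval g n) (enum 'I_n).
Proof.
move=> sz; apply: (@eq_from_nth _ 0); first by rewrite size_map size_enum_ord.
move=> i ig; rewrite sz in ig.
by rewrite (nth_map (Ordinal ig)) ?size_enum_ord // /wval nth_enum_ord.
Qed.

Lemma filter_word n g (P : pred nat) : size g = n ->
  [seq x <- g | P x] = map (@wval g n) (enum [set i : 'I_n | P (wval g i)]).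
Proof.
move=> sz; rewrite {1}(word_map sz) filter_map enum_sub; congr map.
by apply: eq_filter => i; rewrite in_set.
Qed.

End P6a.
Import P6a.

Module P6b.
Set Implicit Arguments. Unset Strict Implicit. Unset Printing Implicit Defensive.

Definition Fcond n (T : {set {set 'I_n}}) (g : seq nat) :=
  [forall i, forall j, leT T i j ==> (wval g i <= wval g j)].

Lemma TpartE n (T : {set {set 'I_n}}) g :
  is_Tpartition T g = [&& size g == n, packed g & Fcond T g].
Proof. by []. Qed.

Lemma img_enum_val n (Y : {set 'I_n}) : [set enum_val a | a in 'I_#|Y|] = Y.
Proof.
apply/setP => x; apply/imsetP/idP => [[a _ ->]|/enum_val_of[a ->]].
  exact: enum_valP.
by exists a.
Qed.

Lemma card_split2C n (S : {set 'I_n * 'I_n}) (O : {set 'I_n}) :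
  (forall p, p \in S -> (p.1 \in ~: O) = (p.2 \in ~: O)) ->
  #|S| = #|[set p in S | (p.1 \in ~: O) && (p.2 \in ~: O)]|
       + #|[set p in S | (p.1 \in O) && (p.2 \in O)]|.
Proof. by move=> H; rewrite (card_split2 H) setCK. Qed.

Lemma card_split3C n (S : {set 'I_n * 'I_n * 'I_n}) (O : {set 'I_n}) :
  (forall t, t \in S -> (t.1.1 \in ~: O) = (t.1.2 \in ~: O) /\ (t.1.2 \in ~: O) = (t.2 \in ~: O)) ->
  #|S| = #|[set t in S | [&& t.1.1 \in ~: O, t.1.2 \in ~: O & t.2 \in ~: O]]|
       + #|[set t in S | [&& t.1.1 \in O, t.1.2 \in O & t.2 \in O]]|.
Proof. by move=> H; rewrite (card_split3 H) setCK. Qed.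

Section Core.
Variables (n : nat) (T : {set {set 'I_n}}) (O : {set 'I_n}) (g u v : seq nat).
Hypothesis szg : size g = n.
Hypothesis hu : u = map (@wval g n) (enum (~: O)).
Hypothesis szv : size v = #|O|.
Hypothesis hv : forall a b : 'I_#|O|,
  (wval v a <= wval v b) = (wval g (enum_val a) <= wval g (enum_val b)).
Hypothesis cross : forall i j : 'I_n, i \notin O -> j \in O -> wval g i < wval g j.

Lemma wval_u (a : 'I_#|~: O|) : wval u a = wval g (enum_val a).
Proof. by rewrite /wval hu nth_enum_map. Qed.

Lemma hwu (a b : 'I_#|~: O|) :
  (wval u a == wval u b) = (wval g (enum_val a) == wval g (enum_val b)).
Proof. by rewrite !wval_u. Qed.

Lemma hwv (a b : 'I_#|O|) :
  (wval v a == wval v b) = (wval g (enum_val a) == wval g (enum_val b)).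
Proof. by rewrite !eqn_leq !hv. Qed.

Lemma hTY (Y : {set 'I_n}) a b : leT (stdres T Y) a b = leT T (enum_val a) (enum_val b).
Proof. exact: leT_stdres. Qed.

Lemma same_side (i j : 'I_n) : wval g i = wval g j -> (i \in ~: O) = (j \in ~: O).
Proof.
move=> e; rewrite !inE; case iO: (i \in O); case jO: (j \in O) => //.
  by have := cross (negbT jO) iO; rewrite e ltnn.
by have := cross (negbT iO) jO; rewrite e ltnn.
Qed.

Lemma core_ell1 : ell1 T g = (ell1 (stdres T (~: O)) u + ell1 (stdres T O) v)%N.
Proof.
rewrite (ell1_transport (s := enum_val) (@enum_val_mono _ _) (@hTY (~: O)) hwu).
rewrite (ell1_transport (s := enum_val) (@enum_val_mono _ _) (@hTY O) hwv).
rewrite !img_enum_val ell1E; apply: card_split2C => p.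
by rewrite inE => /and3P[_ _ /eqP]; apply: same_side.
Qed.

Lemma core_ell2 : ell2 T g = (ell2 (stdres T (~: O)) u + ell2 (stdres T O) v)%N.
Proof.
rewrite (ell2_transport (s := enum_val) (@enum_val_mono _ _) (@hTY (~: O)) hwu).
rewrite (ell2_transport (s := enum_val) (@enum_val_mono _ _) (@hTY O) hwv).
rewrite !img_enum_val ell2E; apply: card_split2C => p.
by rewrite inE => /and3P[_ _ /eqP]; apply: same_side.
Qed.

Lemma core_ell3 : ell3 T g = (ell3 (stdres T (~: O)) u + ell3 (stdres T O) v)%N.
Proof.
rewrite (ell3_transport (s := enum_val) (@enum_val_mono _ _) (@hTY (~: O)) hwu).
rewrite (ell3_transport (s := enum_val) (@enum_val_mono _ _) (@hTY O) hwv).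
rewrite !img_enum_val ell3E; apply: card_split3C => -[[i j] k].
rewrite inE /= => /and5P[_ _ _ _ /and3P[_ /eqP e1 /eqP e2]].
by rewrite (same_side e1) (same_side e2).
Qed.

Lemma core_F : O \in T ->
  Fcond T g = Fcond (stdres T (~: O)) u && Fcond (stdres T O) v.
Proof.
move=> OT; apply/forallP/andP => [H|[/forallP H1 /forallP H2]].
  split; apply/forallP => a; apply/forallP => b; apply/implyP.
    rewrite leT_stdres !wval_u; exact/implyP/(forallP (H _)).
  rewrite leT_stdres hv; exact/implyP/(forallP (H _)).
move=> i; apply/forallP => j; apply/implyP => ij.
case iO: (i \in O); case jO: (j \in O).
- have [a ea] := enum_val_of iO; have [b eb] := enum_val_of jO; subst i j.
  by rewrite -hv; have := forallP (H2 a) b; rewrite leT_stdres => /implyP; apply.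
- by have := forallP ij O; rewrite OT iO jO.
- by apply: ltnW; apply: cross; rewrite ?iO.
- have iO' : i \in ~: O by rewrite inE iO.
  have jO' : j \in ~: O by rewrite inE jO.
  have [a ea] := enum_val_of iO'; have [b eb] := enum_val_of jO'; subst i j.
  by rewrite -!wval_u; have := forallP (H1 a) b; rewrite leT_stdres => /implyP; apply.
Qed.

End Core.

End P6b.
Import P6b.

Module P6c.
Set Implicit Arguments. Unset Strict Implicit. Unset Printing Implicit Defensive.

Lemma pack_shift g k : packed g -> k <= maxw g ->
  pack [seq x <- g | k < x] = map (subn^~ k) [seq x <- g | k < x].
Proof.
move=> pg km; have /packedP[H1 H2] := pg.
rewrite packE; apply/eq_in_map => x; rewrite mem_filter => /andP[kx xg].
have P : perm_eq (undup [seq y <- [seq x0 <- g | k < x0] | y <= x]) (iota k.+1 (x - k)).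
  apply: uniq_perm; [exact: undup_uniq | exact: iota_uniq |].
  move=> z; rewrite mem_undup !mem_filter mem_iota.
  apply/andP/andP => [[zx /andP[kz zg]]|[kz zx]].
    split => //; lia.
  have zx' : z <= x by lia.
  split => //; apply/andP; split => //.
  apply: H2; have := mem_maxw xg; lia.
by rewrite /rk (perm_size P) size_iota.
Qed.

Lemma filter_le_packed g k : packed g -> k <= maxw g ->
  packed [seq x <- g | x <= k] /\ maxw [seq x <- g | x <= k] = k.
Proof.
move=> pg km; have /packedP[H1 H2] := pg.
have mle : maxw [seq x <- g | x <= k] <= k.
  by apply/bigmax_leqP_seq => x; rewrite mem_filter => /andP[].
have mge : k <= maxw [seq x <- g | x <= k].
  case: k km mle => [//|k] km _; apply: mem_maxw; rewrite mem_filter leqnn /=.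
  by apply: H2; rewrite km.
split; last by apply/eqP; rewrite eqn_leq mle mge.
apply/packedP; split.
  by move=> x; rewrite mem_filter => /andP[_ /H1].
move=> j /andP[j0 jm]; rewrite mem_filter (leq_trans jm mle) /=.
by apply: H2; rewrite j0 /=; apply: leq_trans km; exact: leq_trans jm mle.
Qed.

Lemma pack_add v k : packed v -> pack (map (addn^~ k) v) = v.
Proof.
move=> pv; apply: packed_eq => //; first exact: pack_packed.
  by rewrite size_pack size_map.
move=> i j; rewrite size_pack size_map => iv jv.
by rewrite nth_pack_le ?size_map // !(nth_map 0) // leq_add2r.
Qed.

Lemma mem_wval n g (i : 'I_n) : size g = n -> wval g i \in g.
Proof. by move=> sz; rewrite /wval mem_nth // sz. Qed.

Definition build n (O : {set 'I_n}) (u v : seq nat) : seq nat :=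
  map (fun i : 'I_n => if i \in O then nth 0 v (index i (enum O)) + maxw u
                       else nth 0 u (index i (enum (~: O)))) (enum 'I_n).

Lemma wval_build n (O : {set 'I_n}) u v (i : 'I_n) :
  wval (build O u v) i = if i \in O then nth 0 v (index i (enum O)) + maxw u
                         else nth 0 u (index i (enum (~: O))).
Proof. by rewrite /wval /build (nth_map i) ?size_enum_ord // nth_ord_enum. Qed.

Lemma size_build n (O : {set 'I_n}) u v : size (build O u v) = n.
Proof. by rewrite size_map size_enum_ord. Qed.

End P6c.
Import P6c.

Module P6d.
Set Implicit Arguments. Unset Strict Implicit. Unset Printing Implicit Defensive.
Import GRing.Theory.
Local Open Scope ring_scope.

Lemma nth_map0 (T : Type) (x : T) (f : T -> nat) s i : (i < size s)%N ->
  nth 0%N (map f s) i = f (nth x s i).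
Proof. by move=> H; rewrite (set_nth_default (f x)) ?size_map // (nth_map x). Qed.

Section Cop.
Variables (K : fieldType) (q1 q2 q3 : K) (n : nat) (T : {set {set 'I_n}}).
Hypothesis tT : is_topology T.
Variables (u v : seq nat).
Notation G := (Gamma q1 q2 q3).

Definition cnd (p : n.-tuple 'I_n.+1 * 'I_n.+1) :=
  [&& packed (toword p.1), (p.2 <= maxw (toword p.1))%N,
      [seq x <- toword p.1 | (x <= p.2)%N] == u &
      pack [seq x <- toword p.1 | (p.2 < x)%N] == v].
Definition phi p := if cnd p then G T (toword p.1) else 0.
Definition up (p : n.-tuple 'I_n.+1 * 'I_n.+1) := [set i : 'I_n | (p.2 < wval (toword p.1) i)%N].
Definition psi (O : {set 'I_n}) := G (stdres T (~: O)) u * G (stdres T O) v.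

Lemma Gamma_split (O : {set 'I_n}) g :
  size g = n -> u = map (@wval g n) (enum (~: O)) -> size v = #|O| ->
  (forall a b : 'I_#|O|, (wval v a <= wval v b)%N = (wval g (enum_val a) <= wval g (enum_val b))%N) ->
  (forall i j : 'I_n, i \notin O -> j \in O -> (wval g i < wval g j)%N) ->
  O \in T -> packed g -> packed u -> packed v ->
  G T g = psi O.
Proof.
move=> szg hu szv hv cross OT pg pu pv.
rewrite /psi /Gamma !TpartE szg pg pu pv (core_F hu hv cross OT) !eqxx /=.
have -> : size u == #|~: O| by rewrite hu size_map size_enum_set.
rewrite szv eqxx /=.
case: (Fcond _ u); last by rewrite mul0r.
case: (Fcond _ v); last by rewrite mulr0.
rewrite /= (core_ell1 T hu hv cross) (core_ell2 T hu hv cross)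
  (core_ell3 T hu hv cross) !exprD.
move: (q1 ^+ ell1 (stdres T (~: O)) u) (q1 ^+ ell1 (stdres T O) v)
      (q2 ^+ ell2 (stdres T (~: O)) u) (q2 ^+ ell2 (stdres T O) v)
      (q3 ^+ ell3 (stdres T (~: O)) u) (q3 ^+ ell3 (stdres T O) v).
by move=> a a' b b' c c'; ring.
Qed.

Lemma D1 p : phi p != 0 ->
  [/\ up p \in T, phi p = psi (up p), toword p.1 = build (up p) u v & val p.2 = maxw u].
Proof.
rewrite /phi; case c: (cnd p); last by rewrite eqxx.
move=> /Gamma_Tpart; rewrite TpartE => /and3P[_ _ Fg].
move: c => /and4P[pg km /eqP fu /eqP fv].
set g := toword p.1; set k := val p.2; set O := up p.
have szg : size g = n by rewrite size_toword.
have compO : [set i : 'I_n | (wval g i <= k)%N] = ~: O.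
  by apply/setP => i; rewrite !inE -leqNgt.
have hu : u = map (@wval g n) (enum (~: O)) by rewrite -fu (filter_word _ szg) compO.
have hfv : [seq x <- g | (k < x)%N] = map (@wval g n) (enum O) by rewrite (filter_word _ szg).
have szv : size v = #|O| by rewrite -fv size_pack hfv size_map size_enum_set.
have hv (a b : 'I_#|O|) :
    (wval v a <= wval v b)%N = (wval g (enum_val a) <= wval g (enum_val b))%N.
  by rewrite -fv /wval nth_pack_le ?hfv ?size_map ?size_enum_set ?ltn_ord // !nth_enum_map.
have cross (i j : 'I_n) : i \notin O -> j \in O -> (wval g i < wval g j)%N.
  rewrite !inE -leqNgt => ik kj; exact: leq_ltn_trans ik kj.
have OT : O \in T.
  apply: upset_open => // i j; rewrite !inE => ki ij.
  by apply: leq_trans ki _; move/forallP: Fg => /(_ i)/forallP/(_ j); rewrite ij.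
have [pu mu] := filter_le_packed pg km.
rewrite fu in pu mu.
have pv : packed v by rewrite -fv pack_packed.
split => //.
- exact: (Gamma_split szg hu szv hv cross OT pg pu pv).
- rewrite (word_map szg) /build mu; apply/eq_map => i.
  case iO: (i \in O).
    have := pack_shift pg km; rewrite fv => ->.
    rewrite -/g -/k hfv (nth_map0 0) ?size_map ?size_enum_set ?index_lt // (nth_map0 i) ?size_enum_set ?index_lt //.
    rewrite nth_index ?mem_enum // subnK //; apply: ltnW.
    by move: iO; rewrite inE.
  have iO' : i \in ~: O by rewrite inE iO.
  by rewrite hu (nth_map0 i) ?size_enum_set ?index_lt // nth_index ?mem_enum.
Qed.

Lemma U p p' : phi p != 0 -> phi p' != 0 -> up p = up p' -> p = p'.
Proof.
move=> /D1[_ _ e1 k1] /D1[_ _ e2 k2] eu.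
case: p p' e1 e2 k1 k2 eu => [t k] [t' k'] /= e1 e2 k1 k2 eu.
rewrite eu -e2 in e1; have -> := toword_inj e1.
by have -> : k = k' by apply: val_inj; rewrite /= k1 k2.
Qed.

Lemma D2 (O : {set 'I_n}) : O \in T -> psi O != 0 ->
  exists p, up p = O /\ phi p = psi O.
Proof.
move=> OT; rewrite /psi mulf_eq0 negb_or => /andP[/Gamma_Tpart Tu /Gamma_Tpart Tv].
move: Tu Tv; rewrite !TpartE => /and3P[/eqP szu pu Fu] /and3P[/eqP szv pv Fv].
set k := maxw u; set g := build O u v.
have szg : size g = n := size_build O u v.
have /packedP[Hu1 Hu2] := pu; have /packedP[Hv1 Hv2] := pv.
have wO (i : 'I_n) : i \in O -> wval g i = (nth 0%N v (index i (enum O)) + k)%N.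
  by move=> iO; rewrite wval_build iO.
have wC (i : 'I_n) : i \notin O -> wval g i = nth 0%N u (index i (enum (~: O))).
  by move=> iO; rewrite wval_build (negbTE iO).
have lowC (i : 'I_n) : i \notin O -> (0 < wval g i <= k)%N.
  move=> iO; rewrite wC //; have iO' : i \in ~: O by rewrite inE.
  have ul : nth 0%N u (index i (enum (~: O))) \in u by rewrite mem_nth // szu index_lt.
  by rewrite Hu1 // mem_maxw.
have highO (i : 'I_n) : i \in O -> (k < wval g i)%N.
  move=> iO; rewrite wO //.
  have vl : nth 0%N v (index i (enum O)) \in v by rewrite mem_nth // szv index_lt.
  have := Hv1 _ vl; lia.
have hu : u = map (@wval g n) (enum (~: O)).
  rewrite -[LHS](map_nth_index (enum_uniq (mem (~: O)))); last by rewrite szu size_enum_set.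
  apply/eq_in_map => i; rewrite mem_enum inE => iO; by rewrite wC.
have hv (a b : 'I_#|O|) :
    (wval v a <= wval v b)%N = (wval g (enum_val a) <= wval g (enum_val b))%N.
  by rewrite !wO ?enum_valP // !index_enum_val leq_add2r.
have cross (i j : 'I_n) : i \notin O -> j \in O -> (wval g i < wval g j)%N.
  by move=> iO jO; have := lowC i iO; have := highO j jO; lia.
have compO : [set i : 'I_n | (wval g i <= k)%N] = ~: O.
  apply/setP => i; rewrite !inE; case iO: (i \in O).
    by have := highO i iO; lia.
  by have := lowC i (negbT iO); lia.
have upO : [set i : 'I_n | (k < wval g i)%N] = O.
  apply/setP => i; rewrite !inE; case iO: (i \in O).
    by have := highO i iO; lia.
  by have := lowC i (negbT iO); lia.
have mg x : x \in u -> x \in g.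
  by rewrite hu => /mapP[i _ ->]; apply: mem_wval.
have kmax : (k <= maxw g)%N.
  by apply/bigmax_leqP_seq => x xu _; apply: mem_maxw; apply: mg.
have mv : [seq x <- g | (k < x)%N] = map (addn^~ k) v.
  rewrite (filter_word _ szg) upO.
  rewrite -[in RHS](map_nth_index (enum_uniq (mem O)) (s := v)); last by rewrite szv size_enum_set.
  rewrite -map_comp; apply/eq_in_map => i; rewrite mem_enum => iO /=; by rewrite wO.
have pg : packed g.
  apply/packedP; split.
    move=> x; rewrite (word_map szg) => /mapP[i _ ->].
    case iO: (i \in O); last by have := lowC i (negbT iO); lia.
    by have := highO i iO; lia.
  move=> x /andP[x0 xm].
  case: (leqP x k) => xk; first by apply: mg; apply: Hu2; rewrite x0.
  have : (x - k)%N \in v.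
    apply: Hv2; apply/andP; split; first lia.
    have : (maxw g <= maxw v + k)%N.
      apply/bigmax_leqP_seq => y; rewrite (word_map szg) => /mapP[i _ ->] _.
      case iO: (i \in O); last by have := lowC i (negbT iO); lia.
      rewrite wO //; rewrite leq_add2r; apply: mem_maxw; rewrite mem_nth // szv index_lt //.
    lia.
  move=> xv; have : x \in [seq y <- g | (k < y)%N].
    by rewrite mv; apply/mapP; exists (x - k)%N => //; lia.
  by rewrite mem_filter => /andP[].
have Tg : is_Tpartition T g.
  by rewrite TpartE szg eqxx pg (core_F hu hv cross OT) Fu Fv.
have kn : (k < n.+1)%N by rewrite ltnS -szg; apply: leq_trans kmax (maxw_size pg).
have [t et] := toword_ex szg pg.
exists (t, Ordinal kn); split.
  by rewrite /up /= et.
rewrite /phi /cnd /= et pg kmax (filter_word _ szg) compO -hu eqxx mv pack_add // eqxx /=.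
exact: (Gamma_split szg hu szv hv cross OT pg pu pv).
Qed.

Lemma stepA : wcoprod n (G T) u v = \sum_p phi p.
Proof.
rewrite /wcoprod -(pair_big xpredT xpredT (fun t k => phi (t, k))) /=.
apply: eq_bigr => t _.
rewrite -/(toword t).
case pg: (packed (toword t)); last first.
  by rewrite big1 // => k _; rewrite /phi /cnd /= pg.
have mn : ((maxw (toword t)).+1 <= n.+1)%N.
  by rewrite ltnS -{2}(size_toword t) maxw_size.
rewrite big_mkord.
rewrite (big_ord_widen _ (fun k : nat => ((([seq x <- toword t | (x <= k)%N] == u) &&
  (pack [seq x <- toword t | (k < x)%N] == v))%:R : K)) mn) mulr_sumr big_mkcond /=.
apply: eq_bigr => k _; rewrite /phi /cnd /= pg /= ltnS.
case: (k <= maxw (toword t))%N => //=.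
by case: (_ && _); rewrite ?mulr1 ?mulr0.
Qed.

Lemma stepB (O : {set 'I_n}) :
  \sum_p (if up p == O then phi p else 0) = if O \in T then psi O else 0.
Proof.
case E: [exists p, (up p == O) && (phi p != 0)].
  move/existsP: E => [p0 /andP[/eqP e0 nz0]].
  have [OT ph _ _] := D1 nz0; rewrite e0 in OT ph; rewrite OT.
  rewrite (bigD1 p0) //= e0 eqxx big1 ?addr0 // => p np.
  case: eqP => // ep; apply/eqP; apply: contraR np => nz.
  by apply/eqP; apply: U => //; rewrite ep e0.
rewrite big1; last first.
  move=> p _; case: eqP => // ep; apply/eqP; apply: contraFT E => nz.
  by apply/existsP; exists p; rewrite ep eqxx.
case OT: (O \in T) => //; apply/esym/eqP; apply: contraFT E => nz.
have [p [ep ph]] := D2 OT nz.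
by apply/existsP; exists p; rewrite ep eqxx ph.
Qed.

Lemma copP : wcoprod n (G T) u v = \sum_(O in T) psi O.
Proof.
rewrite stepA [RHS]big_mkcond /=.
under [RHS]eq_bigr => O _ do rewrite -stepB.
rewrite exchange_big /=; apply: eq_bigr => p _.
rewrite (bigD1 (up p)) //= eqxx big1 ?addr0 // => O /negbTE nO.
by rewrite eq_sym nO.
Qed.

End Cop.

End P6d.
Import P6d.

Import GRing.Theory.
Local Open Scope ring_scope.

Theorem proposition14 (K : fieldType) (q1 q2 q3 : K) :
  [/\
   (* homogeneous *)
   (forall (n : nat) (T : {set {set 'I_n}}), is_topology T ->
      forall g : seq nat, Gamma q1 q2 q3 T g != 0 -> size g = n),
   (* bialgebra (hence Hopf algebra) morphism *)
   [/\
     (* unit *)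
     (forall g : seq nat, Gamma q1 q2 q3 unitT g = (g == [::])%:R),
     (* product *)
     (forall (n n' : nat) (T : {set {set 'I_n}}) (T' : {set {set 'I_n'}}),
        is_topology T -> is_topology T' ->
        forall g : seq nat,
          Gamma q1 q2 q3 (tprod T T') g
          = wprod (Gamma q1 q2 q3 T) (Gamma q1 q2 q3 T') g),
     (* counit *)
     (forall (n : nat) (T : {set {set 'I_n}}), is_topology T ->
        wcounit (Gamma q1 q2 q3 T) = (n == 0)%:R)
     &
     (* coproduct *)
     (forall (n : nat) (T : {set {set 'I_n}}), is_topology T ->
        forall u v : seq nat,
          wcoprod n (Gamma q1 q2 q3 T) u v
          = \sum_(O in T) Gamma q1 q2 q3 (stdres T (~: O)) u
                          * Gamma q1 q2 q3 (stdres T O) v)],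
   (* surjective *)
   (forall (n : nat) (f : seq nat), size f = n -> packed f ->
      exists c : {set {set 'I_n}} -> K,
        (forall T, c T != 0 -> is_topology T) /\
        (forall g : seq nat,
           \sum_(T : {set {set 'I_n}}) c T * Gamma q1 q2 q3 T g
           = (g == f)%:R))
   &
   (* j o Gamma_(q2,q1,q3) = Gamma_(q1,q2,q3) o iota *)
   (forall (n : nat) (T : {set {set 'I_n}}), is_topology T ->
      forall g : seq nat,
        jmap (Gamma q2 q1 q3 T) g = Gamma q1 q2 q3 (iotaT T) g)].
Proof.
split.
- by move=> n T _ g H; exact: homog H.
- split.
  + exact: unitP.
  + exact: prodP.
  + by move=> n T _; exact: counitP.
  + by move=> n T tT u v; exact: copP.
- by move=> n f sz pf; exact: surj.
- by move=> n T _ g; exact: jpart.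
Qed.
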